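(* Let $G = K \rtimes_\varphi \langle t\rangle$ be a finitely generated group, where $K$ is abelian, $\langle t\rangle$ is infinite cyclic and $\varphi\in\mathrm{Aut}(K)$. Then the set of periodic points $P_\varphi=\{a\in K:\ \varphi^n(a)=a\text{ for some } n\ge1\}$ is a finitely generated subgroup of $K$ satisfying $\varphi(P_\varphi)=P_\varphi$.
   Context: $K$ is written additively and $tkt^{-1}=\varphi(k)$. *)

(* Defs.v *)
From HB Require Import structures.
From mathcomp Require Import all_boot all_order all_algebra.
Set Implicit Arguments. Unset Strict Implicit. Unset Printing Implicit Defensive.
Import Order.TTheory GRing.Theory Num.Theory.
Local Open Scope ring_scope.

Definition zpow (K : Type) (phi phiinv : K -> K) (m : int) : K -> K :=
  match m with
  | Posz n => iter n phi
  | Negz n => iter n.+1 phiinv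
  end.

(* The semidirect product G = K x|_phi <t>, elements (a, m) standing for a t^m,
   with (a,m)(b,n) = (a + phi^m b, m + n), identity (0,0),
   inverse (a,m)^-1 = (- phi^{-m} a, -m). *)
Section SD.
Variables (K : zmodType) (phi phiinv : K -> K).

Definition sd_mul (x y : K * int) : K * int :=
  (x.1 + zpow phi phiinv x.2 y.1, x.2 + y.2).
Definition sd_one : K * int := (0, 0).
Definition sd_inv (x : K * int) : K * int :=
  (- zpow phi phiinv (- x.2) x.1, - x.2).

Inductive sd_gen (s : seq (K * int)) : K * int -> Prop :=
  | sd_gen_base x : x \in s -> sd_gen s x
  | sd_gen_one : sd_gen s sd_one
  | sd_gen_mul x y : sd_gen s x -> sd_gen s y -> sd_gen s (sd_mul x y)
  | sd_gen_inv x : sd_gen s x -> sd_gen s (sd_inv x).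

Definition sd_fin_gen : Prop := exists s : seq (K * int), forall g, sd_gen s g.
End SD.

Inductive zgen (K : zmodType) (s : seq K) : K -> Prop :=
  | zgen_base x : x \in s -> zgen s x
  | zgen_zero : zgen s 0
  | zgen_sub x y : zgen s x -> zgen s y -> zgen s (x - y).

Definition periodic_pts (K : Type) (phi : K -> K) (a : K) : Prop :=
  exists2 n : nat, (0 < n)%N & iter n phi a = a.

(* Main.v *)
From HB Require Import structures.
From mathcomp Require Import all_boot all_order all_algebra.
From mathcomp Require Import zify.
From Stdlib Require Import Classical IndefiniteDescription FunctionalExtensionality.
From Stdlib Require List.
Require Import Defs.
Set Implicit Arguments. Unset Strict Implicit. Unset Printing Implicit Defensive.
Import Order.TTheory GRing.Theory Num.Theory.
Local Open Scope ring_scope.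

Inductive span (V : Type) (z : V) (sb : V -> V -> V) (sx : V -> V) (gs : list V) : V -> Prop :=
| sp_base v : List.In v gs -> span z sb sx gs v
| sp_zero : span z sb sx gs z
| sp_sub u v : span z sb sx gs u -> span z sb sx gs v -> span z sb sx gs (sb u v)
| sp_X v : span z sb sx gs v -> span z sb sx gs (sx v).

Lemma span_mono V z sb sx (gs hs : list V) v :
  (forall g, List.In g gs -> List.In g hs) -> span z sb sx gs v -> span z sb sx hs v.
Proof. move=> H; elim; [move=> ? /H; exact: sp_base|exact: sp_zero|move=> *; exact: sp_sub|move=> *; exact: sp_X]. Qed.

Lemma span_sub_closed V z sb sx (gs : list V) (S : V -> Prop) :
  S z -> (forall u v, S u -> S v -> S (sb u v)) -> (forall v, S v -> S (sx v)) ->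
  (forall g, List.In g gs -> S g) -> forall v, span z sb sx gs v -> S v.
Proof. move=> H0 H1 H2 H3 v; elim => //; auto. Qed.

Lemma min_ex (P : nat -> Prop) n : P n -> exists m, P m /\ forall k, P k -> (m <= k)%N.
Proof.
suff H : forall N n, (n <= N)%N -> P n -> exists m, P m /\ forall k, P k -> (m <= k)%N.
  by move=> Pn; exact: (H n n (leqnn n) Pn).
move=> {n}; elim=> [|N IH] n Hn Pn.
  exists n; split => // k _; move: Hn; rewrite leqn0 => /eqP ->; done.
case: (classic (exists k, (k < n)%N /\ P k)) => [[k [Hk Pk]]|H].
  apply: (IH k) => //; lia.
exists n; split => // k Pk; case: (leqP n k) => // Hk; exfalso; apply: H; by exists k.
Qed.

Lemma zclosed_mulz (V : zmodType) (Q : V -> Prop) :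
  Q 0 -> (forall x y, Q x -> Q y -> Q (x - y)) -> forall x k, Q x -> Q (x *~ k).
Proof.
move=> H0 Hsb x k Qx.
have Hn : forall n, Q (x *+ n).
  elim=> [|n IH]; first by rewrite mulr0n.
  have := Hsb _ _ IH (Hsb _ _ H0 Qx). by rewrite sub0r opprK mulrS addrC.
case: k => n; first exact: Hn.
have := Hsb _ _ H0 (Hn n.+1). by rewrite sub0r.
Qed.

Lemma int_principal (Q : int -> Prop) :
  Q 0 -> (forall x y, Q x -> Q y -> Q (x - y)) ->
  exists g, Q g /\ forall c, Q c -> exists k : int, c = k * g.
Proof.
move=> H0 Hsb.
case: (classic (exists c, Q c /\ c != 0)) => [[c [Qc c0]]|H]; last first.
  exists 0; split => // c Qc; exists 0; rewrite mul0r.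
  case: (eqVneq c 0) => // cn; exfalso; apply: H; by exists c.
have HN : forall x, Q x -> Q (- x) by move=> x Qx; have := Hsb _ _ H0 Qx; rewrite sub0r.
have Pc : (0 < `|c|)%N /\ Q `|c|%N.
  split; first by rewrite absz_gt0.
  rewrite abszE; case: (ler0P c) => _; [exact: HN|done].
have [m [[m0 Qm] Hm]] := @min_ex (fun n => (0 < n)%N /\ Q n%:Z) _ Pc.
exists m; split => // d Qd.
exists (d %/ m)%Z.
have Hr : Q (d - (m%:Z) *~ (d %/ m)%Z) by apply: (Hsb) => //; exact: (zclosed_mulz H0 Hsb).
rewrite mulrzz mulrC in Hr.
have mnz : (m%:Z != 0) by rewrite eqz_nat -lt0n.
have E := divz_eq d m.
set r := (d %% m)%Z in E.
have r0 := modz_ge0 d mnz. have rlt : (r < m%:Z) by apply: ltz_pmod; rewrite ltz_nat.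
rewrite -/r in r0.
have Er : d - (d %/ m)%Z * m = r by rewrite {1}E addrC addKr.
rewrite Er in Hr.
case: (eqVneq r 0) => [r_0|rn]; first by rewrite {1}E r_0 addr0.
exfalso.
have : (m <= `|r|)%N by apply: Hm; split; [rewrite absz_gt0|rewrite gez0_abs].
rewrite -lez_nat gez0_abs //. rewrite leNgt rlt. done.
Qed.
Definition ispan (gs : list {poly int}) := span 0 (fun p q : {poly int} => p - q) (fun p => 'X * p) gs.

Lemma isp_mulz gs p k : ispan gs p -> ispan gs (p *~ k).
Proof. apply: (zclosed_mulz (Q := ispan gs)); [exact: sp_zero|move=> *; exact: sp_sub]. Qed.

Lemma isp_add gs p q : ispan gs p -> ispan gs q -> ispan gs (p + q).
Proof.
move=> Hp Hq; have := sp_sub Hp (sp_sub (sp_zero _ _ _ _) Hq).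
by rewrite sub0r opprK.
Qed.

Lemma isp_Xn gs p m : ispan gs p -> ispan gs ('X^m * p).
Proof.
move=> Hp; elim: m => [|m IH]; first by rewrite expr0 mul1r.
by rewrite exprS -mulrA; apply: sp_X.
Qed.

Lemma coef_high (p : {poly int}) n j : (size p <= n.+1)%N -> (n < j)%N -> p`_j = 0.
Proof. by move/leq_sizeP => H Hj; apply: H. Qed.

Lemma hbt (I : {poly int} -> Prop) :
  I 0 -> (forall p q, I p -> I q -> I (p - q)) -> (forall p, I p -> I ('X * p)) ->
  exists gs, (forall g, List.In g gs -> I g) /\ forall p, I p -> ispan gs p.
Proof.
move=> I0 IB IX.
have IXn : forall m p, I p -> I ('X^m * p).
  move=> m p Ip; elim: m => [|m IH]; first by rewrite expr0 mul1r.
  by rewrite exprS -mulrA; apply: IX.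
have Iz : forall p k, I p -> I (p *~ k) by move=> p k; apply: zclosed_mulz.
pose L d (z : int) := exists p, I p /\ (size p <= d.+1)%N /\ p`_d = z.
have L0 : forall d, L d 0 by move=> d; exists 0; rewrite size_poly0 coef0.
have LB : forall d x y, L d x -> L d y -> L d (x - y).
  move=> d x y [p [Ip [sp <-]]] [q [Iq [sq <-]]]; exists (p - q); split; first exact: IB.
  split; last by rewrite coefB.
  by apply: leq_trans (size_polyD _ _) _; rewrite size_polyN geq_max sp sq.
have LS : forall d z, L d z -> L d.+1 z.
  move=> d z [p [Ip [sp <-]]]; exists ('X * p); split; first exact: IX.
  split; last by rewrite coefXM.
  apply: leq_trans (size_polyMleq _ _) _; rewrite size_polyX; lia.
have Lle : forall d e z, (d <= e)%N -> L d z -> L e z.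
  move=> d e z de; rewrite -(subnKC de); elim: (e - d)%N => [|m IH]; first by rewrite addn0.
  by move=> Lz; rewrite addnS; apply: LS; apply: IH.
have Hg : forall d, {g : int | L d g /\ forall c, L d c -> exists k : int, c = k * g}.
  move=> d; apply: constructive_indefinite_description; apply: int_principal => //; exact: LB.
pose gf d := proj1_sig (Hg d).
have Hf : forall d, {f : {poly int} | I f /\ (size f <= d.+1)%N /\ f`_d = gf d}.
  move=> d; apply: constructive_indefinite_description; exact: (proj1 (proj2_sig (Hg d))).
pose fw d := proj1_sig (Hf d).
pose U z := exists d, L d z.
have [g [[D LDg] Hgen]] : exists g, U g /\ forall c, U c -> exists k : int, c = k * g.
  apply: int_principal; first by exists 0%N.
  move=> x y [d Lx] [e Ly]; exists (maxn d e); apply: LB; apply: Lle (Lx) || apply: Lle (Ly);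
  by rewrite ?leq_maxl ?leq_maxr.
exists (List.map fw (List.seq 0 D.+1)); split.
  move=> h Hh; have [d [<- _]] := proj1 (List.in_map_iff _ _ _) Hh; exact: (proj1 (proj2_sig (Hf d))).
have inG : forall d, (d <= D)%N -> ispan (List.map fw (List.seq 0 D.+1)) (fw d).
  move=> d dD; apply: sp_base; apply/List.in_map_iff; exists d; split => //.
  apply/List.in_seq; lia.
suff H : forall N (p : {poly int}), (size p <= N)%N -> I p -> ispan (List.map fw (List.seq 0 D.+1)) p.
  by move=> p; apply: H (leqnn _).
elim=> [|N IH] p sp Ip.
  move: sp; rewrite leqn0 size_poly_eq0 => /eqP ->; exact: sp_zero.
case: (leqP (size p) N) => spN; first exact: IH.
have sN : size p = N.+1 by apply/eqP; rewrite eqn_leq sp spN.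
have LNp : L N p`_N by exists p; rewrite sN.
have [fI [fs fc]] := proj2_sig (Hf N).
case: (leqP N D) => ND.
  have [k Ek] := proj2 (proj2_sig (Hg N)) _ LNp.
  set q := p - fw N *~ k.
  have Iq : I q by apply: IB => //; apply: Iz.
  have sq : (size q <= N)%N.
    apply/leq_sizeP => j Nj; rewrite /q coefB coefMrz.
    case: (eqVneq j N) => [->|jN].
      by rewrite Ek fc mulrzz mulrC subrr.
    rewrite (coef_high (n := N)) ?sN //; last lia.
    rewrite (coef_high (n := N) fs); last lia.
    by rewrite mul0rz subrr.
  have -> : p = q + fw N *~ k by rewrite /q subrK.
  apply: isp_add; first exact: IH.
  by apply: isp_mulz; apply: inG.
have [k Ek] := Hgen _ (ex_intro _ N LNp).
have [k' Ek'] := proj2 (proj2_sig (Hg D)) _ LDg.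
have [fI' [fs' fc']] := proj2_sig (Hf D).
set q := p - ('X^(N - D) * fw D) *~ (k * k').
have Iq : I q by apply: IB => //; apply: Iz; apply: IXn.
have sq : (size q <= N)%N.
  apply/leq_sizeP => j Nj; rewrite /q coefB coefMrz coefXnM.
  have -> : (j < N - D)%N = false by apply/negbTE; rewrite -leqNgt; lia.
  case: (eqVneq j N) => [->|jN].
    have -> : (N - (N - D))%N = D by lia.
    by rewrite Ek Ek' fc' mulrzz; apply/eqP; rewrite subr_eq0 mulrA mulrC.
  rewrite (coef_high (n := N)) ?sN //; last lia.
  rewrite (coef_high (n := D) fs'); last lia.
  by rewrite mul0rz subrr.
have -> : p = q + ('X^(N - D) * fw D) *~ (k * k') by rewrite /q subrK.
apply: isp_add; first exact: IH.
by apply: isp_mulz; apply: isp_Xn; apply: inG.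
Qed.
Definition Vec := nat -> {poly int}.
Definition vz : Vec := fun _ => 0.
Definition vsub (u v : Vec) : Vec := fun i => u i - v i.
Definition vX (v : Vec) : Vec := fun i => 'X * v i.
Definition vspan (gs : list Vec) := span vz vsub vX gs.

Lemma lift_span r (vs : list Vec) c :
  ispan (List.map (fun v => v r) vs) c -> exists u, vspan vs u /\ u r = c.
Proof.
elim.
- move=> v /List.in_map_iff [u [<- Hu]]; exists u; split => //; exact: sp_base.
- by exists vz; split => //; exact: sp_zero.
- move=> p q _ [u [Hu <-]] _ [w [Hw <-]]; exists (vsub u w); split => //; exact: sp_sub.
- move=> p _ [u [Hu <-]]; exists (vX u); split => //; exact: sp_X.
Qed.

Lemma noeth r : forall (S : Vec -> Prop), S vz -> (forall u v, S u -> S v -> S (vsub u v)) ->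
  (forall v, S v -> S (vX v)) -> (forall v, S v -> forall i, (r <= i)%N -> v i = 0) ->
  exists gs, (forall g, List.In g gs -> S g) /\ forall v, S v -> vspan gs v.
Proof.
elim: r => [|r IH] S S0 SB SX Sb.
  exists nil; split => // v Sv.
  have -> : v = vz by apply: functional_extensionality => i; exact: Sb.
  exact: sp_zero.
pose I c := exists v, S v /\ v r = c.
have [cs [Hcs Hall]] : exists gs, (forall g, List.In g gs -> I g) /\ forall p, I p -> ispan gs p.
  apply: hbt.
  - by exists vz.
  - move=> p q [u [Su <-]] [w [Sw <-]]; exists (vsub u w); split => //; exact: SB.
  - move=> p [u [Su <-]]; exists (vX u); split => //; exact: SX.
have [vs [Hvs Evs]] : exists vs, (forall v, List.In v vs -> S v) /\ List.map (fun v => v r) vs = cs.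
  elim: cs Hcs {Hall} => [|c cs IHc] Hc; first by exists nil.
  have [vs [H1 H2]] := IHc (fun g Hg => Hc g (or_intror Hg)).
  have [v [Sv Ev]] := Hc c (or_introl erefl).
  exists (v :: vs); split; last by rewrite /= Ev H2.
  by move=> u [<-|]; [|apply: H1].
have [us [Hus Hall']] : exists gs, (forall g, List.In g gs -> S g /\ g r = 0) /\
    forall v, S v /\ v r = 0 -> vspan gs v.
  apply: IH.
  - by split.
  - move=> u v [Su Eu] [Sv Ev]; split; first exact: SB.
    by rewrite /vsub Eu Ev subrr.
  - move=> v [Sv Ev]; split; first exact: SX.
    by rewrite /vX Ev mulr0.
  - move=> v [Sv Ev] i ri; case: (eqVneq i r) => [->|ir] //; apply: Sb => //; lia.
exists (vs ++ us); split.
  move=> g Hg; case: (List.in_app_or _ _ _ Hg) => [/Hvs|/Hus []] //.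
move=> v Sv.
have Ivr : I (v r) by exists v.
have [u [Hu Eu]] := lift_span (eq_ind_r (fun l => ispan l (v r)) (Hall _ Ivr) Evs).
have Su : S u by apply: (span_sub_closed S0 SB SX Hvs).
have Hw : vspan us (vsub v u) by apply: Hall'; split; [exact: SB|rewrite /vsub Eu subrr].
have -> : v = vsub u (vsub vz (vsub v u)).
  by apply: functional_extensionality => i; rewrite /vsub /vz sub0r opprK addrC subrK.
apply: sp_sub; first by apply: span_mono Hu => g Hg; apply: List.in_or_app; left.
apply: sp_sub; first exact: sp_zero.
by apply: span_mono Hw => g Hg; apply: List.in_or_app; right.
Qed.
Section Add.
Lemma add0 (K : zmodType) (f : K -> K) : {morph f : x y / x + y} -> f 0 = 0.
Proof. move=> fa; have H := fa 0 0; rewrite addr0 in H; apply: (addrI (f 0)); by rewrite -H addr0. Qed.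

Lemma addN (K : zmodType) (f : K -> K) : {morph f : x y / x + y} -> forall x, f (- x) = - f x.
Proof. move=> fa x; apply: (addrI (f x)); by rewrite -fa !subrr add0. Qed.

Lemma addB (K : zmodType) (f : K -> K) : {morph f : x y / x + y} -> forall x y, f (x - y) = f x - f y.
Proof. by move=> fa x y; rewrite fa addN. Qed.

Lemma addMn (K : zmodType) (f : K -> K) : {morph f : x y / x + y} -> forall x n, f (x *+ n) = f x *+ n.
Proof. move=> fa x; elim=> [|n IH]; first by rewrite !mulr0n add0. by rewrite !mulrS fa IH. Qed.

Lemma addMz (K : zmodType) (f : K -> K) : {morph f : x y / x + y} -> forall x k, f (x *~ k) = f x *~ k.
Proof. move=> fa x [] n; first exact: addMn. by rewrite !NegzE !mulrNz addN // addMn. Qed.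

Lemma addSum (K : zmodType) (f : K -> K) : {morph f : x y / x + y} ->
  forall n (F : 'I_n -> K), f (\sum_(i < n) F i) = \sum_(i < n) f (F i).
Proof. move=> fa n F; exact: (big_morph f fa (add0 fa)). Qed.

Lemma iter_add (K : zmodType) (f : K -> K) : {morph f : x y / x + y} -> forall n, {morph iter n f : x y / x + y}.
Proof. move=> fa; elim=> [|n IH] x y //=; by rewrite IH fa. Qed.

Lemma inv_add (K : zmodType) (f g : K -> K) : {morph f : x y / x + y} -> cancel f g -> cancel g f ->
  {morph g : x y / x + y}.
Proof. move=> fa fg gf x y; apply: (can_inj fg); by rewrite fa !gf. Qed.
End Add.

Definition act (K : zmodType) (phi : K -> K) (p : {poly int}) (a : K) :=
  \sum_(i < size p) iter i phi a *~ p`_i.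

Lemma act_ext (K : zmodType) (phi : K -> K) (p : {poly int}) a n : (size p <= n)%N ->
  act phi p a = \sum_(i < n) iter i phi a *~ p`_i.
Proof.
move=> sn; rewrite /act -(subnKC sn); elim: (n - size p)%N => [|m IH]; first by rewrite addn0.
rewrite addnS big_ord_recr /= -IH.
have -> : p`_(size p + m) = 0 by apply/leq_sizeP: (leq_addr m (size p)).
by rewrite mulr0z addr0.
Qed.

Lemma act_sub (K : zmodType) (phi : K -> K) (p q : {poly int}) a : act phi (p - q) a = act phi p a - act phi q a.
Proof.
set n := maxn (size p) (size q).
rewrite (@act_ext _ phi (p - q) a n); last by apply: leq_trans (size_polyD _ _) _; rewrite size_polyN.
rewrite (@act_ext _ phi p a n (leq_maxl _ _)) (@act_ext _ phi q a n (leq_maxr _ _)).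
rewrite -sumrB; apply: eq_bigr => i _; by rewrite coefB mulrzBr.
Qed.

Lemma act_X (K : zmodType) (phi : K -> K) (fa : {morph phi : x y / x + y}) (p : {poly int}) a :
  act phi ('X * p) a = phi (act phi p a).
Proof.
rewrite (@act_ext _ phi ('X * p) a (size p).+1); last first.
  apply: leq_trans (size_polyMleq _ _) _; rewrite size_polyX; lia.
rewrite big_ord_recl coefXM /= mulr0z add0r /act addSum //.
apply: eq_bigr => i _; by rewrite coefXM /= add0n (addMz fa).
Qed.

Lemma act_1 (K : zmodType) (phi : K -> K) a : act phi 1 a = a.
Proof. by rewrite /act size_poly1 big_ord1 coef1 /= mulr1z. Qed.

Lemma act_0 (K : zmodType) (phi : K -> K) a : act phi 0 a = 0.
Proof. by rewrite /act size_poly0 big_ord0. Qed.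

Definition piv (K : zmodType) (phi : K -> K) (b : list K) (v : Vec) :=
  \sum_(i < size b) act phi (v i) (seq.nth 0 b i).

Lemma piv_z (K : zmodType) (phi : K -> K) b : piv phi b vz = 0.
Proof. rewrite /piv big1 // => i _; exact: act_0. Qed.

Lemma piv_sub (K : zmodType) (phi : K -> K) b u v : piv phi b (vsub u v) = piv phi b u - piv phi b v.
Proof. rewrite /piv -sumrB; apply: eq_bigr => i _; exact: act_sub. Qed.

Lemma piv_X (K : zmodType) (phi : K -> K) (fa : {morph phi : x y / x + y}) b v :
  piv phi b (vX v) = phi (piv phi b v).
Proof. rewrite /piv addSum //; apply: eq_bigr => i _; exact: act_X. Qed.

Definition ev (i : nat) : Vec := fun j => if j == i then 1 else 0.

Lemma piv_e (K : zmodType) (phi : K -> K) b i : (i < size b)%N -> piv phi b (ev i) = seq.nth 0 b i.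
Proof.
move=> ib; rewrite /piv (bigD1 (Ordinal ib)) //= /ev eqxx act_1 big1 ?addr0 // => j ji.
have -> : (nat_of_ord j == i) = false by apply/negbTE; move: ji; apply: contra => /eqP H; apply/eqP/val_inj.
exact: act_0.
Qed.
Lemma iter_mul_fix (T : Type) (f : T -> T) n k a : iter n f a = a -> iter (n * k) f a = a.
Proof. move=> H; elim: k => [|k IH]; first by rewrite muln0. by rewrite mulnS iterD IH H. Qed.

Lemma in_map_In (T : Type) (U : eqType) (f : T -> U) (l : list T) g :
  List.In g l -> f g \in seq.map f l.
Proof. elim: l => [|h l IH] //= [->|H]; rewrite in_cons; first by rewrite eqxx. by rewrite IH ?orbT. Qed.

Lemma map_in_In (T : Type) (U : eqType) (f : T -> U) (l : list T) y :
  y \in seq.map f l -> exists g, List.In g l /\ y = f g.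
Proof.
elim: l => [|h l IH] //=; rewrite in_cons => /orP [/eqP ->|/IH [g [Hg ->]]].
  by exists h; split => //; left.
by exists g; split => //; right.
Qed.

Lemma zgen_add (K : zmodType) (s : seq.seq K) x y : zgen s x -> zgen s y -> zgen s (x + y).
Proof.
move=> Hx Hy; have := zgen_sub Hx (zgen_sub (zgen_zero s) Hy); by rewrite sub0r opprK.
Qed.

Lemma zgen_ind' (K : zmodType) (s : seq.seq K) (P : K -> Prop) :
  P 0 -> (forall x y, P x -> P y -> P (x - y)) -> (forall x, x \in s -> P x) ->
  forall x, zgen s x -> P x.
Proof. move=> H0 HB Hb x; elim => //; auto. Qed.
Unset Implicit Arguments.

Theorem corollary2p10 (K : zmodType) (phi phiinv : K -> K)
  (phi_add : {morph phi : x y / x + y})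
  (phiK : cancel phi phiinv) (phiinvK : cancel phiinv phi)
  (Gfg : sd_fin_gen phi phiinv) :
  [/\ periodic_pts phi 0,
      (forall a b, periodic_pts phi a -> periodic_pts phi b ->
                   periodic_pts phi (a - b)),
      (exists s : seq K, forall a, periodic_pts phi a <-> zgen s a),
      (forall a, periodic_pts phi a -> periodic_pts phi (phi a)) &
      (forall a, periodic_pts phi a -> exists2 b, periodic_pts phi b & phi b = a)].
Proof.
have phi0 := add0 phi_add.
have phiB := addB phi_add.
have inva := inv_add phi_add phiK phiinvK.
have inv0 := add0 inva.
have invB := addB inva.
have iterB : forall n x y, iter n phi (x - y) = iter n phi x - iter n phi y.
  move=> n; exact: (addB (iter_add phi_add n)).
have iter0 : forall n, iter n phi 0 = 0 by move=> n; exact: (add0 (iter_add phi_add n)).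
have comm : forall m n x, iter m phi (iter n phi x) = iter n phi (iter m phi x).
  by move=> m n x; rewrite -!iterD addnC.
have Hinv : forall m a, iter m phiinv (iter m phi a) = a.
  elim=> [|m IH] a //; by rewrite (iterSr m phiinv) iterS phiK IH.
have Pfix : forall n a, (0 < n)%N -> iter n phi a = a -> periodic_pts phi a.
  by move=> n a n0 H; exists n.
have P0 : periodic_pts phi 0 by exists 1%N => //=.
have PB : forall a b, periodic_pts phi a -> periodic_pts phi b -> periodic_pts phi (a - b).
  move=> a b [n n0 Ha] [m m0 Hb]; exists (n * m)%N; first by rewrite muln_gt0 n0.
  rewrite iterB iter_mul_fix // mulnC iter_mul_fix //.
have Pphi : forall a, periodic_pts phi a -> periodic_pts phi (phi a).
  move=> a [n n0 Ha]; exists n => //; by rewrite -iterSr iterS Ha.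
have Pinv : forall a, periodic_pts phi a -> periodic_pts phi (phiinv a).
  move=> a [n n0 Ha]; exists n => //; apply: (can_inj phiK); by rewrite -iterS iterSr phiinvK Ha.
have Piter : forall m a, periodic_pts phi a -> periodic_pts phi (iter m phi a).
  move=> m a Pa; elim: m => [|m IH] //=; exact: Pphi.
split => //; last first.
  move=> a Pa; exists (phiinv a); [exact: Pinv|exact: phiinvK].
case: Gfg => s Hs.
pose b : list K := [seq x.1 | x <- s].
pose bnd (v : Vec) := forall i, (size b <= i)%N -> v i = 0.
pose Q a := exists m v, bnd v /\ iter m phi a = piv phi b v.
have bndz : bnd vz by [].
have bndB : forall u v, bnd u -> bnd v -> bnd (vsub u v) by move=> u v Hu Hv i Hi; rewrite /vsub Hu ?Hv ?subrr.
have bndX : forall v, bnd v -> bnd (vX v) by move=> v Hv i Hi; rewrite /vX Hv ?mulr0.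
have shift : forall k v, bnd v -> bnd (iter k vX v) /\ iter k phi (piv phi b v) = piv phi b (iter k vX v).
  move=> k v Hv; elim: k => [|k [IH1 IH2]] //=; split; first exact: bndX.
  by rewrite IH2 piv_X.
have Qsh : forall a m v, bnd v -> iter m phi a = piv phi b v -> forall k,
    exists w, bnd w /\ iter (k + m) phi a = piv phi b w.
  move=> a m v Hv E k; have [H1 H2] := shift k v Hv; exists (iter k vX v); split => //.
  by rewrite iterD E.
have Q0 : Q 0 by exists 0%N, vz; split => //; rewrite piv_z.
have QB : forall x y, Q x -> Q y -> Q (x - y).
  move=> x y [m [v [Hv Ex]]] [m' [v' [Hv' Ey]]].
  have [w [Hw Ew]] := Qsh _ _ _ Hv Ex m'.
  have [w' [Hw' Ew']] := Qsh _ _ _ Hv' Ey m.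
  exists (m' + m)%N, (vsub w w'); split; first exact: bndB.
  by rewrite iterB Ew addnC Ew' piv_sub.
have Qphi : forall x, Q x -> Q (phi x).
  move=> x [m [v [Hv Ex]]]; exists m, (vX v); split; first exact: bndX.
  by rewrite -iterSr iterS Ex (piv_X phi_add).
have Qinv : forall x, Q x -> Q (phiinv x).
  move=> x [m [v [Hv Ex]]]; exists m.+1, v; split => //.
  by rewrite iterSr phiinvK.
have Qadd : forall x y, Q x -> Q y -> Q (x + y).
  move=> x y Qx Qy; have := QB _ _ Qx (QB _ _ Q0 Qy); by rewrite sub0r opprK.
have Qzpow : forall (m : int) x, Q x -> Q (zpow phi phiinv m x).
  move=> [] n x Qx /=; elim: n => [|n IH] /=; by [|apply: Qphi|apply: Qinv].
have Qall : forall g, sd_gen phi phiinv s g -> Q g.1.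
  move=> g; elim.
  - move=> x xs.
    have xb : x.1 \in b by apply: map_f.
    have ib : (index x.1 b < size b)%N by rewrite index_mem.
    exists 0%N, (ev (index x.1 b)); split.
      move=> i Hi; rewrite /ev; case: eqP => // E; move: ib; rewrite -E; lia.
    by rewrite piv_e // nth_index.
  - exact: Q0.
  - move=> x y _ Qx _ Qy; rewrite /sd_mul /=; apply: Qadd => //; exact: Qzpow.
  - move=> x _ Qx; rewrite /sd_inv /=; have := QB _ _ Q0 (Qzpow (- x.2) _ Qx); by rewrite sub0r.
pose S (v : Vec) := bnd v /\ periodic_pts phi (piv phi b v).
have [gs [Hgs Hgen]] : exists gs, (forall g, List.In g gs -> S g) /\ forall v, S v -> vspan gs v.
  apply: (noeth (r := size b)).
  - by split => //; rewrite piv_z.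
  - move=> u v [Hu Pu] [Hv Pv]; split; [exact: bndB|rewrite piv_sub; exact: PB].
  - move=> v [Hv Pv]; split; [exact: bndX|rewrite (piv_X phi_add); exact: Pphi].
  - by move=> v [Hv _].
have [N [N0 HN]] : exists N, (0 < N)%N /\ forall g, List.In g gs -> iter N phi (piv phi b g) = piv phi b g.
  elim: gs Hgs {Hgen} => [|g gs IH] Hg; first by exists 1%N.
  have [N [N0 HN]] := IH (fun h Hh => Hg h (or_intror Hh)).
  have [_ [n n0 Hn]] := Hg g (or_introl erefl).
  exists (N * n)%N; split; first by rewrite muln_gt0 N0.
  move=> h [<-|Hh]; first by rewrite mulnC iter_mul_fix.
  by rewrite iter_mul_fix // HN.
pose ps := seq.map (piv phi b) gs.
have Hps : forall p, p \in ps -> iter N phi p = p.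
  move=> p /map_in_In [g [Hg ->]]; exact: HN.
pose L := [seq iter j phi p | p <- ps, j <- iota 0 N].
have inL : forall p j, p \in ps -> (j < N)%N -> iter j phi p \in L.
  move=> p j pp jN; apply/allpairsP; exists (p, j); split => //=; rewrite mem_iota; lia.
have Zfix : forall x, zgen L x -> iter N phi x = x.
  apply: zgen_ind'; first exact: iter0.
    by move=> x y Hx Hy; rewrite iterB Hx Hy.
  move=> x /allpairsP [[p j] [pp jj ->]] /=; by rewrite comm Hps.
have Zphi : forall x, zgen L x -> zgen L (phi x).
  apply: zgen_ind'; first by rewrite phi0; exact: zgen_zero.
    by move=> x y Hx Hy; rewrite phiB; exact: zgen_sub.
  move=> x /allpairsP [[p j] [pp jj ->]] /=; rewrite mem_iota /= in jj pp.
  apply: zgen_base; rewrite -iterS.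
  case: (ltnP j.+1 N) => jN; first exact: inL.
  have -> : j.+1 = N by lia.
  rewrite Hps //; exact: (inL p 0%N).
have Zinv : forall x, zgen L x -> zgen L (phiinv x).
  apply: zgen_ind'; first by rewrite inv0; exact: zgen_zero.
    by move=> x y Hx Hy; rewrite invB; exact: zgen_sub.
  move=> x /allpairsP [[p j] [pp jj ->]] /=; rewrite mem_iota /= in jj pp.
  apply: zgen_base; case: j jj => [|j] jj.
    have -> : phiinv (iter 0 phi p) = iter N.-1 phi p.
      apply: (can_inj phiK); rewrite phiinvK -iterS prednK //; exact: (esym (Hps p pp)).
    apply: inL => //; lia.
  rewrite /= phiK; apply: inL => //; lia.
have Zpiv : forall u, vspan gs u -> zgen L (piv phi b u).
  apply: (span_sub_closed (S := fun u => zgen L (piv phi b u))).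
  - rewrite piv_z; exact: zgen_zero.
  - move=> u v Hu Hv; rewrite piv_sub; exact: zgen_sub.
  - move=> v Hv; rewrite (piv_X phi_add); exact: Zphi.
  - move=> g Hg; apply: zgen_base; apply: (inL _ 0%N) => //; exact: in_map_In.
exists L => a; split.
  move=> Pa; have [m [v [Hv Ev]]] : Q a by have := Qall _ (Hs (a, 0)).
  have Sv : S v by split => //; rewrite -Ev; exact: Piter.
  have Zv := Zpiv _ (Hgen _ Sv).
  rewrite -(Hinv m a) Ev; elim: m {Ev} => [|m IH] //=; exact: Zinv.
move=> Za; exists N => //; exact: Zfix.
Qed.
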